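(* Let $C(t,p;x)=p+\sum_{n\ge1}x^n\sum_{D\in\mathcal{D}_n}t^{\mathrm{seg}(D)}p^{\mathrm{lseg}(D)}$, and write $C=C(t,p;x)$ and $C(t,1)=C(t,1;x)$. Then $$tp^2x^2C(t,1)^2+px(C-pxC-p)C(t,1)-(C-pxC-p)=0.$$
   Context: A Dyck path of semilength $n$ is a lattice path from $(0,0)$ to $(n,n)$ with east steps $(1,0)$ and north steps $(0,1)$ never passing above $y=x$; encode it as $d_1\cdots d_n$ with $d_i$ the number of north steps before the $i$-th east step. $\mathcal{D}_n$ is the set of these paths. A segment is a maximal string of at least two consecutive east steps of the same height; $\mathrm{seg}(D)$ is the number of segments. $\mathrm{lseg}(D)=i$ if the $i$-th east step is the last step of the leftmost segment of $D$, and $\mathrm{lseg}(D)=n+1$ if $D$ has no segment. *)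

(* Defs.v *)
From HB Require Import structures.
From mathcomp Require Import all_boot all_order all_algebra.
Set Implicit Arguments. Unset Strict Implicit. Unset Printing Implicit Defensive.
Import GRing.Theory.

(* A Dyck path of semilength n is encoded as d_1 ... d_n (here 0-indexed:
   d = [:: d_1; ...; d_n] : seq nat), d_i = number of north steps before the
   i-th east step.  Never passing above y = x  <->  d nondecreasing and
   d_i <= i - 1 (1-indexed), i.e. nth 0 d j <= j (0-indexed). *)
Definition is_dyck (n : nat) (d : seq nat) : bool :=
  (size d == n) && sorted leq d && all (fun j => nth 0 d j <= j) (iota 0 n).

(* run-length encoding: list of (height, number of consecutive east steps) *)
Fixpoint rle (s : seq nat) : seq (nat * nat) :=
  match s with
  | [::] => [::]
  | x :: s' =>
    match rle s' with
    | (y, m) :: r => if x == y then (x, m.+1) :: r else (x, 1) :: (y, m) :: r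
    | [::] => [:: (x, 1)]
    end
  end.

(* segments = maximal runs of length >= 2 *)
Definition is_segment (r : nat * nat) : bool := 2 <= r.2.

Definition seg (d : seq nat) : nat := count is_segment (rle d).

(* index (1-based) of the last east step of the leftmost segment; n+1 if none *)
Definition lseg (d : seq nat) : nat :=
  let rs := rle d in
  if has is_segment rs then sumn (take (find is_segment rs).+1 (map snd rs))
  else (size d).+1.

Definition Ccoef (R : comNzRingType) (t p : R) (n : nat) : R :=
  if n == 0 then p
  else (\sum_(D : n.-tuple 'I_n | is_dyck n (map val D))
          t ^+ seg (map val D) * p ^+ lseg (map val D))%R.

Definition Ctrunc (R : comNzRingType) (t p : R) (N : nat) : {poly R} :=
  \poly_(i < N) Ccoef t p i.

(* Main.v *)
Require Import Defs.
From mathcomp Require Import all_boot all_order all_algebra.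
From mathcomp Require Import zify.
Import GRing.Theory.
Set Implicit Arguments. Unset Strict Implicit. Unset Printing Implicit Defensive.

Fixpoint goodS (h lo : nat) (d : seq nat) : bool :=
  if d is x :: d' then [&& lo <= x, x <= h & goodS h.+1 x d'] else true.

Lemma goodS_shift c h lo d : goodS (c + h) (c + lo) (map (addn c) d) = goodS h lo d.
Proof. by elim: d h lo => //= x d IH h lo; rewrite !leq_add2l -addnS IH. Qed.

Lemma goodS_ge h lo d : goodS h lo d -> all (leq lo) d.
Proof.
elim: d h lo => //= x d IH h lo /and3P[lx _ /IH H]; rewrite lx /=.
by apply/allP => y /(allP H); apply: leq_trans.
Qed.

Lemma goodS_lt h lo d : goodS h lo d -> all (fun x => x < h + size d) d.
Proof.
elim: d h lo => //= x d IH h lo /and3P[_ xh /IH H].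
apply/andP; split; first lia.
by apply/allP => y /(allP H) /=; lia.
Qed.

Lemma goodS_monoh h h' lo d : h <= h' -> goodS h lo d -> goodS h' lo d.
Proof.
elim: d h h' lo => //= x d IH h h' lo hh /and3P[-> xh H].
by rewrite (leq_trans xh hh) /=; apply: IH H.
Qed.

Lemma goodS_monolo h lo lo' d : lo' <= lo -> goodS h lo d -> goodS h lo' d.
Proof. by case: d => //= x d l /and3P[lx -> ->]; rewrite (leq_trans l lx). Qed.

Lemma goodS_cat h lo a b :
  goodS h lo (a ++ b) = goodS h lo a && goodS (h + size a) (last lo a) b.
Proof.
elim: a h lo => /= [|x a IH] h lo; first by rewrite addn0.
by rewrite IH addSnnS !andbA.
Qed.

Lemma goodS_last h lo d : goodS h lo d -> last lo d <= maxn lo (h + size d).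
Proof.
elim: d h lo => /= [|x d IH] h lo; first by rewrite leq_maxl.
move=> /and3P[lx xh /IH]; lia.
Qed.

Lemma goodS_nseq0 h k : goodS h 0 (nseq k 0).
Proof. by elim: k h => //= k IH h; rewrite IH leq0n. Qed.

Lemma goodS_nth h lo d j : goodS h lo d -> j < size d -> nth 0 d j <= j + h.
Proof.
elim: d h lo j => //= x d IH h lo [|j] /and3P[_ xh H] //= lt.
by have := IH _ _ j H lt; lia.
Qed.

Lemma goodS_split h a lo d : goodS (h.+1 + a) lo d -> lo <= a ->
  exists Q e, [/\ goodS a lo Q, goodS h 0 e & d = Q ++ map (addn (a + size Q).+1) e].
Proof.
elim: d a lo => [|x d IH] a lo; first by exists [::], [::].
move=> /= /and3P[lx xh H] la; case: (leqP x a) => xa.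
  have H' : goodS (h.+1 + a.+1) x d by rewrite addnS.
  have [Q [e [H1 H2 ->]]] := IH a.+1 x H' (leqW xa).
  by exists (x :: Q), e; split => //=; rewrite ?lx ?xa ?addSnnS.
exists [::], (map (subn^~ a.+1) (x :: d)).
have Hge : goodS (h.+1 + a) a.+1 (x :: d) by rewrite /= xa xh H.
have Hall := goodS_ge Hge.
have Ed : map (addn a.+1) (map (subn^~ a.+1) (x :: d)) = x :: d.
  by rewrite -map_comp; apply: map_id_in => y /(allP Hall) /= ?; rewrite subnKC.
split => //; last by rewrite addn0 Ed.
rewrite -(goodS_shift a.+1) Ed addn0.
by have -> : a.+1 + h = h.+1 + a by lia.
Qed.

Lemma goodS_zeros s d : goodS s.+1 0 d ->
  exists z e, d = nseq z 0 ++ map (addn 1) e /\ goodS (s + z) 0 e.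
Proof.
elim: d s => [|x d IH] s; first by exists 0, [::].
move=> /= /andP[xs H]; case: x xs H => [|x] xs H.
  have [z [e [-> He]]] := IH s.+1 H.
  by exists z.+1, e; split => //; rewrite -addSnnS.
exists 0, (map predn (x.+1 :: d)).
have Hge : goodS s.+1 1 (x.+1 :: d) by rewrite /= xs H.
have Hall := goodS_ge Hge.
have Ed : map (addn 1) (map predn (x.+1 :: d)) = x.+1 :: d.
  by rewrite -map_comp; apply: map_id_in => y /(allP Hall) /= ?; rewrite add1n prednK.
split; first by rewrite Ed.
by rewrite addn0 -(goodS_shift 1) Ed add1n.
Qed.

Fixpoint allseq (B m : nat) : seq (seq nat) :=
  if m is m'.+1 then [seq x :: s | x <- iota 0 B, s <- allseq B m'] else [:: [::]].

Lemma mem_allseq B m s : (s \in allseq B m) = (size s == m) && all (fun x => x < B) s.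
Proof.
elim: m s => [|m IH] [|x s] //=.
- apply/allpairsP => -[[y u] [_ _ //]].
- apply/allpairsP/idP => [[[y u] [/= Hy Hu [-> ->]]]|/andP[/eqP [Hs] /andP[Hx Ha]]].
    move: Hu Hy; rewrite IH mem_iota /= => /andP[/eqP -> ->]; rewrite eqxx /= andbT.
    by rewrite add0n.
  exists (x, s); split => //=; first by rewrite mem_iota.
  by rewrite IH Hs eqxx.
Qed.

Lemma uniq_allseq B m : uniq (allseq B m).
Proof.
elim: m => //= m IH; apply: allpairs_uniq => //; first exact: iota_uniq.
by move=> [x s] [y u] _ _ /= [-> ->].
Qed.

Definition Sm h m := [seq d <- allseq (h + m) m | goodS h 0 d].

Lemma mem_Sm h m d : (d \in Sm h m) = (size d == m) && goodS h 0 d.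
Proof.
rewrite mem_filter mem_allseq; case G: (goodS h 0 d) => /=; last by rewrite andbF.
by case: eqP => //= <-; apply: goodS_lt G.
Qed.

Lemma uniq_Sm h m : uniq (Sm h m).
Proof. exact/filter_uniq/uniq_allseq. Qed.

Lemma uniq_allpairs_inj (S T U : eqType) (f : S -> T -> U) (s : seq S) (t : S -> seq T) :
  uniq s -> (forall x, x \in s -> uniq (t x)) ->
  (forall x x' y y', x \in s -> x' \in s -> y \in t x -> y' \in t x' ->
     f x y = f x' y' -> x = x' /\ y = y') ->
  uniq [seq f x y | x <- s, y <- t x].
Proof.
elim: s => //= x s IH /andP[xs us] ut inj.
rewrite cat_uniq; apply/and3P; split.
- rewrite map_inj_in_uniq ?ut ?mem_head // => y y' yt y't E.
  by case: (inj x x y y') => //; rewrite mem_head.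
- apply/hasP => -[z /allpairsPdep [x' [y' [x's y't ->]]] /mapP [y yt E]].
  have x's' : x' \in x :: s by rewrite inE x's orbT.
  have [ex _] := inj x x' y y' (mem_head _ _) x's' yt y't (esym E).
  by move: xs; rewrite ex x's.
- apply: IH => // [x' x's|x1 x2 y1 y2 h1 h2]; first by apply: ut; rewrite inE x's orbT.
  by apply: inj; rewrite inE ?h1 ?h2 orbT.
Qed.

Lemma rle_shape x s : exists m r, rle (x :: s) = (x, m.+1) :: r.
Proof.
elim: s x => [|y s IH] x; first by exists 0, [::].
have [m [r E]] := IH y; rewrite /= -/(rle (y :: s)) E.
by case: eqP => [->|_]; [exists m.+1, r | exists 0, ((y, m.+1) :: r)].
Qed.

Lemma rle_cat a b : (forall x y, x \in a -> y \in b -> x != y) ->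
  rle (a ++ b) = rle a ++ rle b.
Proof.
elim: a => //= x a IH H.
rewrite IH => [|u v ua vb]; last by apply: H => //; rewrite inE ua orbT.
case: a H {IH} => [|z a] H /=.
  case: b H => [|y b] H //=.
  have [m [r E]] := rle_shape y b; rewrite -/(rle (y :: b)) E.
  by rewrite (negbTE (H x y (mem_head _ _) (mem_head _ _))).
have [m [r E]] := rle_shape z a; rewrite -/(rle (z :: a)) E /=.
by case: (x == z).
Qed.

Lemma rle_map f s : injective f ->
  rle (map f s) = map (fun r => (f r.1, r.2)) (rle s).
Proof.
move=> inj; elim: s => //= x s ->.
case: (rle s) => //= -[y m] r /=.
by rewrite inj_eq //; case: (x == y).
Qed.

Lemma seg_cat a b : (forall x y, x \in a -> y \in b -> x != y) ->
  seg (a ++ b) = seg a + seg b.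
Proof. by move=> H; rewrite /seg rle_cat // count_cat. Qed.

Lemma seg_map f s : injective f -> seg (map f s) = seg s.
Proof. by move=> inj; rewrite /seg rle_map // count_map. Qed.

Lemma rle_nseq0 k : rle (nseq k.+1 0) = [:: (0, k.+1)].
Proof. by elim: k => //= k; rewrite -/(rle (nseq k.+1 0)) /= => ->. Qed.

Lemma rle_P k e : rle (nseq k.+1 0 ++ map (addn 1) e) =
  (0, k.+1) :: map (fun r => (1 + r.1, r.2)) (rle e).
Proof.
rewrite rle_cat ?rle_nseq0 ?rle_map //; first by move=> x y /eqP; rewrite eqn_add2l => /eqP.
move=> x y /nseqP [-> _] /mapP [z _ ->]; by rewrite add1n.
Qed.

Lemma seg_P2 k e : seg (nseq k.+2 0 ++ map (addn 1) e) = (seg e).+1.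
Proof. by rewrite /seg rle_P /= count_map. Qed.

Lemma lseg_P2 k e : lseg (nseq k.+2 0 ++ map (addn 1) e) = k.+2.
Proof. by rewrite /lseg rle_P /= take0 addn0. Qed.

Lemma seg_P1 e : seg (0 :: map (addn 1) e) = seg e.
Proof. by rewrite /seg (rle_P 0 e) /= count_map. Qed.

Lemma lseg_P1 e : lseg (0 :: map (addn 1) e) = (lseg e).+1.
Proof.
rewrite /lseg (rle_P 0 e) /= has_map size_map (@eq_has _ _ is_segment) //.
case: ifP => // _.
rewrite find_map (@eq_find _ _ is_segment) // -map_comp.
by rewrite (@eq_map _ _ _ snd).
Qed.

Lemma addn_inj c : injective (addn c).
Proof. by move=> x y /eqP; rewrite eqn_add2l => /eqP.  Qed.

Definition build2 (i : nat) (Q e : seq nat) := Q ++ map (addn i.+1) e.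

Lemma build2_neq Q Q' e e' : size Q < size Q' -> goodS 0 0 Q' ->
  build2 (size Q) Q e <> build2 (size Q') Q' e'.
Proof.
move=> lt gQ' E; have Hs := congr1 size E; rewrite /build2 !size_cat !size_map in Hs.
case: e E Hs => [|y e] E Hs; first by move: Hs => /=; lia.
have := congr1 (nth 0 ^~ (size Q)) E.
rewrite /build2 nth_cat ltnn subnn /= nth_cat lt => Ey.
by have := goodS_nth gQ' lt; lia.
Qed.

Lemma build2_inj Q Q' e e' : goodS 0 0 Q -> goodS 0 0 Q' ->
  build2 (size Q) Q e = build2 (size Q') Q' e' -> Q = Q' /\ e = e'.
Proof.
case: (ltngtP (size Q) (size Q')) => [lt|gt|eq] gQ gQ' E.
- by case: (@build2_neq Q Q' e e' lt gQ').
- by case: (@build2_neq Q' Q e' e gt gQ); rewrite E.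
- move: E; rewrite /build2 eq => /eqP; rewrite eqseq_cat //.
  by move=> /andP[/eqP -> /eqP /(inj_map (@addn_inj _)) ->].
Qed.

Definition R1list h m := [seq build2 i qe.1 qe.2 | i <- iota 0 m.+1,
  qe <- [seq (Q, e) | Q <- Sm 0 i, e <- Sm h (m - i)]].

Lemma perm_R1 h m : perm_eq (Sm h.+1 m) (R1list h m).
Proof.
apply: uniq_perm; first exact: uniq_Sm.
  apply: uniq_allpairs_inj; first exact: iota_uniq.
    move=> i _; apply: allpairs_uniq; try exact: uniq_Sm.
    by move=> [? ?] [? ?] _ _ /= [-> ->].
  move=> i i' [Q e] [Q' e'] _ _ /allpairsP [[Q1 e1] [/= HQ He [? ?]]]
     /allpairsP [[Q1' e1'] [/= HQ' He' [? ?]]] /=; subst.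
  move: HQ HQ'; rewrite !mem_Sm => /andP[/eqP sQ gQ] /andP[/eqP sQ' gQ'].
  rewrite -{1}sQ -sQ'.
  by move=> /build2_inj [] // ? ?; subst.
move=> d; apply/idP/idP.
  rewrite mem_Sm => /andP[/eqP sd g].
  have g' : goodS (h.+1 + 0) 0 d by rewrite addn0.
  have [Q [e [gQ ge Ed]]] := goodS_split g' (leqnn 0).
  apply/allpairsPdep; exists (size Q), (Q, e); split => //.
  - by rewrite mem_iota add0n ltnS -sd Ed size_cat; apply/andP; split; [exact: leq0n | exact: leq_addr].
  - apply/allpairsP; exists (Q, e); split => //=; rewrite mem_Sm ?eqxx ?gQ ?ge //.
    by rewrite -sd Ed size_cat size_map addKn eqxx.
move=> /allpairsPdep [i [[Q e] [Hi /allpairsP [[Q1 e1] [/= HQ He [-> ->]]] ->]]].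
move: HQ He Hi; rewrite !mem_Sm mem_iota add0n ltnS /build2.
move=> /andP[/eqP sQ gQ] /andP[/eqP se ge] im.
rewrite size_cat size_map sQ se subnKC // eqxx /= goodS_cat.
rewrite (goodS_monoh _ gQ) //=.
have Hl := goodS_last gQ; rewrite /= max0n add0n sQ in Hl.
have -> : h.+1 + size Q1 = i.+1 + h by lia.
apply: (@goodS_monolo _ (i.+1 + 0)); first by lia.
by rewrite goodS_shift.
Qed.

Definition R2list n := [seq nseq k 0 ++ map (addn 1) e | k <- iota 1 n, e <- Sm k.-1 (n - k)].

Lemma P_neq k k' e e' : k < k' ->
  nseq k 0 ++ map (addn 1) e <> nseq k' 0 ++ map (addn 1) e'.
Proof.
move=> lt E; have Hs := congr1 size E; rewrite !size_cat !size_map !size_nseq in Hs.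
case: e E Hs => [|y e] E Hs; first by move: Hs => /=; lia.
have := congr1 (nth 0 ^~ k) E.
by rewrite !nth_cat !size_nseq ltnn subnn lt nth_nseq lt.
Qed.

Lemma perm_R2 n : 0 < n -> perm_eq (Sm 0 n) (R2list n).
Proof.
move=> n0; apply: uniq_perm; first exact: uniq_Sm.
  apply: uniq_allpairs_inj; first exact: iota_uniq.
    by move=> i _; apply: uniq_Sm.
  move=> k k' e e' _ _ _ _.
  case: (ltngtP k k') => [lt|gt|->].
  - by move/(@P_neq _ _ e e' lt).
  - by move=> E; case: (@P_neq _ _ e' e gt).
  - move=> /eqP; rewrite eqseq_cat ?size_nseq //.
    by move=> /andP[_ /eqP /(inj_map (@addn_inj _)) ->].
move=> d; apply/idP/idP.
  rewrite mem_Sm => /andP[/eqP sd g].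
  case: d sd g => [|x d] sd; first by rewrite -sd in n0.
  rewrite /= leqn0 => /andP[/eqP x0 g]; rewrite x0 in g *.
  have [z [e [Ed ge]]] := goodS_zeros g.
  apply/allpairsPdep; exists z.+1, e; split.
  - by rewrite mem_iota -sd Ed /= size_cat size_nseq; lia.
  - by rewrite mem_Sm ge -sd Ed /= size_cat size_map size_nseq subSS addKn eqxx.
  - by rewrite Ed.
move=> /allpairsPdep [k [e [Hk He ->]]].
move: Hk He; rewrite mem_iota mem_Sm => /andP[k1 kn] /andP[/eqP se ge].
rewrite mem_Sm size_cat size_map size_nseq se subnKC; last by lia.
rewrite eqxx /= goodS_cat goodS_nseq0 /= size_nseq.
case: k k1 kn se ge => // k _ kn se ge.
rewrite add0n.
have -> : last 0 (nseq k.+1 0) = 0 by elim: k {kn se ge}.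
apply: (@goodS_monolo _ (1 + 0)) => //.
by rewrite -add1n goodS_shift.
Qed.

Lemma all_iotaS (P : pred nat) m n : all P (iota m.+1 n) = all (fun j => P j.+1) (iota m n).
Proof. by elim: n m => //= n IH m; rewrite IH. Qed.

Lemma goodS_iff h lo d :
  goodS h lo d = path leq lo d && all (fun j => nth 0 d j <= j + h) (iota 0 (size d)).
Proof.
elim: d h lo => //= x d IH h lo.
rewrite IH all_iotaS.
rewrite (@eq_all _ (fun j => nth 0 d j <= j + h.+1) (fun j => nth 0 (x :: d) j.+1 <= j.+1 + h)); last first.
  by move=> j /=; rewrite addSnnS.
by case: (lo <= x); case: (x <= h); case: (path leq x d).
Qed.

Lemma dyck_goodS n d : is_dyck n d = (size d == n) && goodS 0 0 d.
Proof.
rewrite /is_dyck goodS_iff -andbA; case: eqP => //= <-.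
rewrite (@eq_all _ _ (fun j => nth 0 d j <= j + 0)); last by move=> j; rewrite addn0.
by case: d.
Qed.

Local Open Scope ring_scope.

Definition W (R : comNzRingType) (t : R) h m : R := \sum_(d <- Sm h m) t ^+ seg d.
Definition Cc (R : comNzRingType) (t p : R) m : R :=
  \sum_(d <- Sm 0 m) t ^+ seg d * p ^+ lseg d.

Section Alg.
Variables (R : comNzRingType) (t p : R).

Lemma Cc1 m : Cc t 1 m = W t 0 m.
Proof. by apply: eq_bigr => d _; rewrite expr1n mulr1. Qed.

Lemma Ccoef_Cc n : Ccoef t p n = Cc t p n.
Proof.
case: n => [|n]; first by rewrite /Ccoef /Cc /= big_cons big_nil /= expr0 mul1r expr1 addr0.
rewrite /Ccoef /=.
rewrite -big_filter.
rewrite -(big_map (fun D : n.+1.-tuple 'I_n.+1 => map val D) xpredT (fun d => t ^+ seg d * p ^+ lseg d)).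
apply: perm_big; apply: uniq_perm.
- rewrite map_inj_uniq ?filter_uniq ?index_enum_uniq //.
  by move=> D1 D2 /(inj_map val_inj) /val_inj.
- exact: uniq_Sm.
move=> d; apply/mapP/idP.
  by move=> [D]; rewrite mem_filter dyck_goodS -mem_Sm => /andP[+ _] ->.
rewrite mem_Sm => /andP[sd g].
have Hs : size (map (@inord n) d) == n.+1 by rewrite size_map.
exists (Tuple Hs); last first.
  rewrite /= -map_comp map_id_in // => x /(allP (goodS_lt g)) /=.
  by rewrite add0n (eqP sd) => /inordK.
by rewrite mem_filter mem_index_enum andbT dyck_goodS /= -map_comp map_id_in ?sd //
  => x /(allP (goodS_lt g)) /=; rewrite add0n (eqP sd) => /inordK.
Qed.

Lemma R1 h m : W t h.+1 m = \sum_(i < m.+1) W t 0 i * W t h (m - i).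
Proof.
rewrite /W (perm_big _ (perm_R1 h m)) /R1list big_allpairs_dep.
have -> : iota 0 m.+1 = index_iota 0 m.+1 by rewrite /index_iota subn0.
rewrite big_mkord; apply: eq_bigr => i _.
rewrite big_allpairs_dep /= big_distrl /=; apply: eq_big_seq => Q.
rewrite mem_Sm => /andP[/eqP sQ gQ].
rewrite big_distrr /=; apply: eq_bigr => e _.
rewrite /build2 seg_cat ?seg_map ?exprD //; first exact: addn_inj.
move=> x y /(allP (goodS_lt gQ)) /= + /mapP [z _ ->].
by rewrite add0n sQ; lia.
Qed.

Lemma R2 n : (0 < n)%N -> Cc t p n =
  p * Cc t p n.-1 + \sum_(j < n.-1) t * p ^+ j.+2 * W t j.+1 (n - j.+2).
Proof.
case: n => // n _.
rewrite /Cc (perm_big _ (perm_R2 (ltn0Sn n))) /R2list big_allpairs_dep /=.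
rewrite big_cons; congr (_ + _).
  rewrite subn1 /= big_distrr /=; apply: eq_bigr => e _.
  by rewrite seg_P1 lseg_P1 exprS mulrCA.
have -> : iota 2 n = map (addn 2) (index_iota 0 n).
  by rewrite /index_iota subn0 -iotaDl.
rewrite big_map big_mkord; apply: eq_bigr => j _.
rewrite /W big_distrr /=; apply: eq_bigr => e _.
by rewrite add0n (seg_P2 j e) (lseg_P2 j e) exprS mulrAC.
Qed.

End Alg.

From mathcomp Require Import ring.

Unset Implicit Arguments.
Unset Strict Implicit.

Theorem lemma4p5 (R : comNzRingType) (t p : R) (N k : nat) :
  (k < N)%N ->
  let C := Ctrunc t p N in
  let C1 := Ctrunc t 1 N in
  let B := C - p *: 'X * C - p%:P in
  ((t * p ^+ 2) *: 'X ^+ 2 * C1 ^+ 2 + p *: 'X * B * C1 - B)`_k = 0.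
Proof.
move=> kN C F B.
have hF i : (i < N)%N -> F`_i = W t 0 i.
  by move=> iN; rewrite /F /Ctrunc coef_poly iN Ccoef_Cc Cc1.
have hC i : (i < N)%N -> C`_i = Cc t p i.
  by move=> iN; rewrite /C /Ctrunc coef_poly iN Ccoef_Cc.
have hW h m : (m < N)%N -> (F ^+ h.+1)`_m = W t h m.
  elim: h m => [|h IH] m mN; first by rewrite expr1 hF.
  rewrite exprS coefM R1; apply: eq_bigr => i _.
  have iN : (i < N)%N by have := ltn_ord i; lia.
  by rewrite hF // IH //; lia.
set y := p%:P * 'X * F.
set s := \sum_(j < N) y ^+ j.
set S := t%:P * y ^+ 2 * s.
have eS : S = \sum_(j < N) (t * p ^+ j.+2)%:P * ('X ^+ j.+2 * F ^+ j.+2).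
  rewrite /S /s big_distrr /=; apply: eq_bigr => j _.
  rewrite /y -mulrA -exprD !exprMn polyCM polyC_exp add2n.
  ring.
have hS n : S`_n = \sum_(j < N) (if (n < j.+2)%N then 0 else
                   t * p ^+ j.+2 * (F ^+ j.+2)`_(n - j.+2)).
  by rewrite eS coef_sum; apply: eq_bigr => j _; rewrite coefCM coefXnM; case: ifP; rewrite ?mulr0.
have hB n : (n < N)%N -> B`_n = S`_n.
  move=> nN; rewrite hS /B !coefB -scalerAl coefZ coefXM coefC hC //.
  case: n nN => [|n] nN.
    by rewrite /= -Ccoef_Cc /Ccoef /= mulr0 subr0 subrr big1.
  have -> : (n.+1 == 0)%N = false by [].
  rewrite subr0 hC /=; last by lia.
  rewrite R2 //= addrAC subrr add0r.
  have nN' : (n <= N)%N by lia.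
  rewrite (big_ord_widen N (fun j => t * p ^+ j.+2 * W t j.+1 (n.+1 - j.+2)) nN') big_mkcond.
  apply: eq_bigr => j _.
  rewrite !ltnS; case: (ltnP j n) => jn //.
  by rewrite hW //; lia.
have eG : (t * p ^+ 2) *: 'X^2 * F ^+ 2 + p *: 'X * B * F - B
    = t%:P * y ^+ 2 + B * y - B.
  by rewrite /y -!mul_polyC polyCM; ring.
rewrite eG coefB coefD (coefM B y) (hB k kN).
have -> : \sum_(j < k.+1) B`_j * y`_(k - j) = \sum_(j < k.+1) S`_j * y`_(k - j).
  by apply: eq_bigr => j _; rewrite hB //; have := ltn_ord j; lia.
rewrite -coefM -coefD -coefB.
have -> : t%:P * y ^+ 2 + S * y - S = 'X^(N.+2) * (t%:P * (p%:P * F) ^+ N.+2).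
  have H := subrX1 y N.
  transitivity (t%:P * y ^+ 2 * (1 + (y - 1) * s)); first by rewrite /S; ring.
  rewrite -H addrC subrK -mulrA -exprD add2n /y [p%:P * 'X * F]mulrAC exprMn.
  ring.
rewrite coefXnM.
by have -> : (k < N.+2)%N by lia.
Qed.
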